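(* Let $\Gamma$ be a group. Then for every $j \ge 1$ the nilpotent quotients $P\mathcal{N}i(\Gamma)/\overline{C^j}(P\mathcal{N}i(\Gamma))$ and $\Gamma/C^j(\Gamma)$ are isomorphic, and the topology of $P\mathcal{N}i(\Gamma)$ can be defined by a metric.
   Context: For a group $\Gamma$, let $\mathcal{N}i$ be the family of all normal subgroups $N$ of $\Gamma$ with $\Gamma/N$ nilpotent (a directed family). Let $\mathcal{C}=\bigcap_{N\in\mathcal{N}i}N$; the group $\Gamma/\mathcal{C}$ carries the Hausdorff group topology for which the images of the members of $\mathcal{N}i$ form a basis of neighbourhoods of the identity, and its completion (with respect to the left uniformity) is the true pronilpotent completion $P\mathcal{N}i(\Gamma)$, identifiable with the inverse limit $\varprojlim_{N\in\mathcal{N}i}\Gamma/N$. The lower central series is $C^1(\Gamma)=\Gamma$, $C^{j+1}(\Gamma)=[\Gamma,C^j(\Gamma)]$. For a topological group $G$, $\overline{C^1}(G)=G$ and $\overline{C^{j+1}}(G)$ is the closure of the subgroup generated by commutators $[g,c]$ with $g\in G$, $c\in\overline{C^j}(G)$. *)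

(* Defs.v *)
From Stdlib Require Import Reals.


Record Group := {
  gT :> Type;
  mul : gT -> gT -> gT;
  inv : gT -> gT;
  one : gT;
  mulA : forall x y z, mul x (mul y z) = mul (mul x y) z;
  mul1g : forall x, mul one x = x;
  mulg1 : forall x, mul x one = x;
  mulVg : forall x, mul (inv x) x = one;
  mulgV : forall x, mul x (inv x) = one }.

(** A group presented on a carrier with an equivalence relation (a "setoid
    group"); the group it denotes is the carrier modulo [geq]. Used for
    quotient groups and for the inverse limit. *)
Record GSig := {
  car : Type;
  geq : car -> car -> Prop;
  smul : car -> car -> car;
  sinv : car -> car;
  sone : car }.

Definition sigG (G : Group) : GSig :=
  {| car := gT G; geq := @eq (gT G); smul := @mul G; sinv := @inv G; sone := @one G |}.

Section SigDefs.
Variable Sg : GSig.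
Local Notation "x * y" := (smul Sg x y).
Local Notation "x ^-1" := (sinv Sg x) (at level 3).

Definition subgroup (H : car Sg -> Prop) : Prop :=
  H (sone Sg) /\ (forall x y, H x -> H y -> H (x * y)) /\
  (forall x, H x -> H (x ^-1)) /\ (forall x y, geq Sg x y -> H x -> H y).

Definition normal (N : car Sg -> Prop) : Prop :=
  subgroup N /\ forall g n, N n -> N (g ^-1 * n * g).

Definition gen (A : car Sg -> Prop) : car Sg -> Prop :=
  fun x => forall H, subgroup H -> (forall a, A a -> H a) -> H x.

Definition commg (x y : car Sg) : car Sg := x ^-1 * y ^-1 * x * y.

Definition comms (C : car Sg -> Prop) : car Sg -> Prop :=
  fun x => exists g c, C c /\ x = commg g c.

(** lower central series: lcs 1 = Sg, lcs (j+1) = [Sg, lcs j]; (lcs 0 := Sg too) *)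
Fixpoint lcs (j : nat) : car Sg -> Prop :=
  match j with
  | O => fun _ => True
  | S k => match k with
           | O => fun _ => True
           | _ => gen (comms (lcs k))
           end
  end.

Definition nilpotent : Prop :=
  exists c, forall x, lcs c x -> geq Sg x (sone Sg).

Definition quotient (N : car Sg -> Prop) : GSig :=
  {| car := car Sg; geq := fun x y => N (x * y ^-1);
     smul := smul Sg; sinv := sinv Sg; sone := sone Sg |}.
End SigDefs.

Definition isomorphic (S T : GSig) : Prop :=
  exists f : car S -> car T,
    (forall x y, geq S x y -> geq T (f x) (f y)) /\
    (forall x y, geq T (f (smul S x y)) (smul T (f x) (f y))) /\
    (forall x y, geq T (f x) (f y) -> geq S x y) /\
    (forall z, exists x, geq T (f x) z).

Section ProNil.
Variable G : Group.
Local Notation "x * y" := (mul G x y).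
Local Notation "x ^-1" := (inv G x) (at level 3).

Definition Ni (N : G -> Prop) : Prop :=
  normal (sigG G) N /\ nilpotent (quotient (sigG G) N).

Lemma inv_uniq (a b : G) : a * b = one G -> a ^-1 = b.
Proof.
  intro h. rewrite <- (mulg1 G (a^-1)), <- h, (mulA G), (mulVg G), (mul1g G).
  reflexivity.
Qed.

Lemma invM (x y : G) : (x * y) ^-1 = y ^-1 * x ^-1.
Proof.
  apply inv_uniq. rewrite !(mulA G).
  rewrite <- (mulA G x y (y^-1)), (mulgV G), (mulg1 G), (mulgV G). reflexivity.
Qed.

Lemma inv1 : (one G) ^-1 = one G.
Proof. apply inv_uniq. apply mul1g. Qed.

Lemma invK (x : G) : (x ^-1) ^-1 = x.
Proof. apply inv_uniq. apply mulVg. Qed.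

Definition compat (x : (G -> Prop) -> G) : Prop :=
  forall N M, Ni N -> Ni M -> (forall g, N g -> M g) -> M (x N * (x M) ^-1).

Definition PNiT := { x : (G -> Prop) -> G | compat x }.

Lemma compat_mul (x y : PNiT) : compat (fun N => proj1_sig x N * proj1_sig y N).
Proof.
  destruct x as [x hx], y as [y hy]; intros N M hN hM hNM; simpl.
  pose proof (hx N M hN hM hNM) as ex. pose proof (hy N M hN hM hNM) as ey.
  destruct hM as [[[h1 [hmul [hinv hsat]]] hnorm] _].
  assert (e : (x N * y N) * (x M * y M) ^-1
              = (x N * (x M) ^-1) * (((x M)^-1)^-1 * (y N * (y M)^-1) * (x M)^-1)).
  { rewrite invM, invK, !(mulA G).
    rewrite <- (mulA G (x N) ((x M)^-1) (x M)), (mulVg G), (mulg1 G).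
    reflexivity. }
  rewrite e. apply hmul; [exact ex | apply hnorm; exact ey].
Qed.

Lemma compat_inv (x : PNiT) : compat (fun N => (proj1_sig x N) ^-1).
Proof.
  destruct x as [x hx]; intros N M hN hM hNM; simpl.
  pose proof (hx N M hN hM hNM) as ex.
  destruct hM as [[[h1 [hmul [hinv hsat]]] hnorm] _].
  assert (e : (x N)^-1 * ((x M)^-1)^-1 = (x N)^-1 * (x N * (x M)^-1)^-1 * x N).
  { rewrite invM, !invK, !(mulA G), <- (mulA G _ ((x N)^-1) (x N)), (mulVg G), (mulg1 G). reflexivity. }
  rewrite e. apply hnorm, hinv, ex.
Qed.

Lemma compat_one : compat (fun _ => one G).
Proof.
  intros N M hN hM hNM. destruct hM as [[[h1 _] _] _].
  rewrite inv1, (mulg1 G). exact h1.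
Qed.

(** The inverse limit  P Ni(G) = lim_{N in Ni} G/N, presented as compatible
    families of representatives x_N in G (x_N represents a coset of N),
    two families being equal iff they agree modulo every N in Ni. *)
Definition PNi : GSig :=
  {| car := PNiT;
     geq := fun x y => forall N, Ni N -> N (proj1_sig x N * (proj1_sig y N) ^-1);
     smul := fun x y => exist _ _ (compat_mul x y);
     sinv := fun x => exist _ _ (compat_inv x);
     sone := exist _ _ compat_one |}.

(** Topology of the inverse limit: basic neighbourhoods of x are
    { y | y_N = x_N mod N }, N in Ni (preimages of points of the discrete G/N). *)
Definition PNi_open (U : PNiT -> Prop) : Prop :=
  forall x, U x -> exists N, Ni N /\
    forall y : PNiT, N (proj1_sig y N * (proj1_sig x N) ^-1) -> U y.

Definition PNi_closure (A : PNiT -> Prop) : PNiT -> Prop :=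
  fun x => forall N, Ni N -> exists a, A a /\ N (proj1_sig a N * (proj1_sig x N) ^-1).

Fixpoint clcs (j : nat) : PNiT -> Prop :=
  match j with
  | O => fun _ => True
  | S k => match k with
           | O => fun _ => True
           | _ => PNi_closure (gen PNi (comms PNi (clcs k)))
           end
  end.

(** metrizability: a metric on P Ni(G) (a pseudometric on representatives
    vanishing exactly on the equality of P Ni(G)) inducing its topology *)
Definition PNi_metrizable : Prop :=
  exists d : PNiT -> PNiT -> R,
    (forall x y, (0 <= d x y)%R) /\
    (forall x y, d x y = 0%R <-> geq PNi x y) /\
    (forall x y, d x y = d y x) /\
    (forall x y z, (d x z <= d x y + d y z)%R) /\
    (forall U : PNiT -> Prop,
        PNi_open U <->
        (forall x, U x -> exists eps, (0 < eps)%R /\ forall y, (d x y < eps)%R -> U y)).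
End ProNil.

(* Main.v *)
Require Import Defs.
From Stdlib Require Import Reals Lra Lia Classical ClassicalEpsilon.

Local Infix "*g" := (mul _) (at level 40, left associativity).
Local Notation "x ^-1" := (inv _ x) (at level 3).

Lemma mulgKV (G : Group) (w x : G) : w *g x^-1 *g x = w.
Proof. rewrite <- mulA, mulVg, mulg1; reflexivity. Qed.
Lemma mulgK (G : Group) (w x : G) : w *g x *g x^-1 = w.
Proof. rewrite <- mulA, mulgV, mulg1; reflexivity. Qed.

Ltac gsimpl := rewrite ?invM, ?invK, ?inv1, ?mulA;
  repeat progress rewrite ?mulgKV, ?mulgK, ?mulVg, ?mulgV, ?mul1g, ?mulg1.

Lemma gen_incl (S : GSig) (A : car S -> Prop) x : A x -> gen S A x.
Proof. intros h H _ hA; apply hA, h. Qed.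
Lemma gen_sub (S : GSig) (A H : car S -> Prop) :
  subgroup S H -> (forall a, A a -> H a) -> forall x, gen S A x -> H x.
Proof. intros hH hA x hx; apply hx; assumption. Qed.
Lemma gen_subgroup (S : GSig) (A : car S -> Prop) : subgroup S (gen S A).
Proof.
  repeat split.
  - intros H [h1 _] _; exact h1.
  - intros x y hx hy H hH hA. pose proof hH as (_ & hm & _). apply hm; [apply hx|apply hy]; auto.
  - intros x hx H hH hA. pose proof hH as (_ & _ & hi & _). apply hi; apply hx; auto.
  - intros x y e hx H hH hA. pose proof hH as (_ & _ & _ & hs). apply (hs x y e); apply hx; auto.
Qed.

Lemma lcsSS (Sg : GSig) k : lcs Sg (S (S k)) = gen Sg (comms Sg (lcs Sg (S k))).
Proof. reflexivity. Qed.

Lemma sub_one (G : Group) H : subgroup (sigG G) H -> H (one G).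
Proof. intros [h _]; exact h. Qed.
Lemma sub_mul (G : Group) H x y : subgroup (sigG G) H -> H x -> H y -> H (x *g y).
Proof. intros (_ & h & _); apply h. Qed.
Lemma sub_inv (G : Group) H x : subgroup (sigG G) H -> H x -> H (x^-1).
Proof. intros (_ & _ & h & _); apply h. Qed.
Lemma sub_eq (G : Group) H x y : subgroup (sigG G) H -> x = y -> H x -> H y.
Proof. intros _ ->; auto. Qed.

Lemma normal_conj (G : Group) (N : G -> Prop) g n : normal (sigG G) N -> N n -> N (g^-1 *g n *g g).
Proof. intros [_ h]; apply h. Qed.

Lemma normal_gen_comms (G : Group) (C : G -> Prop) :
  normal (sigG G) C -> normal (sigG G) (gen (sigG G) (comms (sigG G) C)).
Proof.
  intros hC. split; [apply gen_subgroup|].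
  set (A := gen (sigG G) (comms (sigG G) C)).
  assert (hA : subgroup (sigG G) A) by apply gen_subgroup.
  set (T := fun x : G => forall g, A (g^-1 *g x *g g)).
  assert (hT : subgroup (sigG G) T).
  { repeat split.
    - intro g; simpl. apply (sub_eq G A (one G)); [exact hA| |apply sub_one, hA]. gsimpl; reflexivity.
    - intros x y hx hy g; simpl. apply (sub_eq G A ((g^-1 *g x *g g) *g (g^-1 *g y *g g))); [exact hA| |apply sub_mul; [exact hA|apply (hx g)|apply (hy g)]].
      gsimpl; reflexivity.
    - intros x hx g; simpl. apply (sub_eq G A ((g^-1 *g x *g g)^-1)); [exact hA| |apply sub_inv; [exact hA|apply (hx g)]].
      gsimpl; reflexivity.
    - intros x y e hx; simpl in e; subst; exact hx. }
  intros g n hn. refine (gen_sub (sigG G) _ T hT _ n hn g).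
  intros a [u [c [hc ea]]] h. subst a.
  apply gen_incl. exists (h^-1 *g u *g h), (h^-1 *g c *g h). split.
  - apply normal_conj; auto.
  - unfold commg; simpl. gsimpl; reflexivity.
Qed.

Lemma lcs_normal (G : Group) k : normal (sigG G) (lcs (sigG G) k).
Proof.
  assert (hT : normal (sigG G) (fun _ => True)).
  { repeat split; auto. }
  induction k as [|[|k] IH]; [exact hT|exact hT|].
  rewrite lcsSS. apply normal_gen_comms, IH.
Qed.

Lemma lcs_sub (G : Group) k : subgroup (sigG G) (lcs (sigG G) k).
Proof. apply lcs_normal. Qed.

Lemma lcs_decr (G : Group) k x : lcs (sigG G) (S k) x -> lcs (sigG G) k x.
Proof.
  destruct k as [|[|k]]; [intros; exact I|intros; exact I|].
  change (gen (sigG G) (comms (sigG G) (lcs (sigG G) (S (S k)))) x -> lcs (sigG G) (S (S k)) x).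
  apply gen_sub; [apply lcs_sub|].
  intros a [g [c [hc ->]]]. unfold commg; cbn [smul sinv sigG].
  pose proof (lcs_normal G (S (S k))) as hN.
  pose proof (lcs_sub G (S (S k))) as hS.
  apply (sub_eq G _ ((g^-1 *g c^-1 *g g) *g c)); [exact hS| |apply sub_mul; [exact hS| apply (normal_conj G _ g (c^-1)); [exact hN|apply sub_inv; [exact hS|exact hc]] | exact hc]].
  gsimpl; reflexivity.
Qed.

Lemma lcs_mono (G : Group) k l x : (k <= l)%nat -> lcs (sigG G) l x -> lcs (sigG G) k x.
Proof. induction 1; auto. intro h; apply IHle, lcs_decr, h. Qed.

Lemma lcs_subgroup_gen (Sg : GSig) k : subgroup Sg (lcs Sg k).
Proof.
  destruct k as [|[|k]]; [repeat split; auto|repeat split; auto|].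
  rewrite lcsSS. apply gen_subgroup.
Qed.

Lemma quot_sub_sub (G : Group) N H : subgroup (quotient (sigG G) N) H -> subgroup (sigG G) H.
Proof.
  intros (h1 & hm & hi & _). repeat split; auto. intros x y e; simpl in e; subst; auto.
Qed.

Lemma lcs_to_quot (G : Group) N k x : lcs (sigG G) k x -> lcs (quotient (sigG G) N) k x.
Proof.
  revert x; induction k as [|[|k] IH]; [intros; exact I|intros; exact I|].
  intros x. rewrite !lcsSS. apply gen_sub.
  - apply (quot_sub_sub G N). apply gen_subgroup.
  - intros a [g [c [hc ->]]]. apply gen_incl. exists g, c. split; [apply IH, hc|reflexivity].
Qed.

Lemma Ni_sub (G : Group) N : Ni G N -> subgroup (sigG G) N.
Proof. intros [[h _] _]; exact h. Qed.

Lemma Ni_bound (G : Group) N : Ni G N -> exists c, forall x, lcs (sigG G) c x -> N x.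
Proof.
  intros hN. pose proof (Ni_sub G N hN) as hS. destruct hN as [_ [c hc]]. exists c.
  intros x hx. pose proof (hc x (lcs_to_quot G N c x hx)) as h. simpl in h.
  rewrite inv1, mulg1 in h. exact h.
Qed.

Lemma Ni_lcs (G : Group) j : Ni G (lcs (sigG G) j).
Proof.
  split; [apply lcs_normal|]. exists j.
  assert (H : forall k, (k <= j)%nat -> forall x, lcs (quotient (sigG G) (lcs (sigG G) j)) k x -> lcs (sigG G) k x).
  { induction k as [|[|k] IH]; [intros; exact I|intros; exact I|].
    intros hk x. rewrite !lcsSS. apply gen_sub.
    - pose proof (lcs_sub G (S (S k))) as hS. repeat split.
      + apply hS.
      + intros; apply hS; auto.
      + intros; apply hS; auto.
      + intros u v e hu. simpl in e.
        apply (sub_eq G _ ((u *g v^-1)^-1 *g u)); [exact hS| gsimpl; reflexivity|].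
        apply sub_mul; [exact hS| |exact hu]. apply sub_inv; [exact hS|].
        exact (lcs_mono G (S (S k)) j _ hk e).
    - intros a [g [c [hc ->]]]. apply gen_incl. exists g, c. split; [apply IH; [lia|exact hc]|reflexivity]. }
  intros x hx. simpl. rewrite inv1, mulg1. apply (H j (le_n j) x hx).
Qed.

Notation "x @@ N" := (proj1_sig x N) (at level 2).

Lemma eqv_sym (G : Group) (N : G -> Prop) a b : subgroup (sigG G) N -> N (a *g b^-1) -> N (b *g a^-1).
Proof. intros hN h. apply (sub_eq G _ ((a *g b^-1)^-1)); [exact hN|gsimpl; reflexivity|apply sub_inv; auto]. Qed.
Lemma eqv_trans (G : Group) (N : G -> Prop) a b c : subgroup (sigG G) N -> N (a *g b^-1) -> N (b *g c^-1) -> N (a *g c^-1).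
Proof. intros hN h1 h2. apply (sub_eq G _ ((a *g b^-1) *g (b *g c^-1))); [exact hN|gsimpl; reflexivity|apply sub_mul; auto]. Qed.
Lemma eqv_mem (G : Group) (N : G -> Prop) a b : subgroup (sigG G) N -> N (a *g b^-1) -> N b -> N a.
Proof. intros hN h1 h2. apply (sub_eq G _ ((a *g b^-1) *g b)); [exact hN|gsimpl; reflexivity|apply sub_mul; auto]. Qed.
Lemma eqv_mem' (G : Group) (N : G -> Prop) a b : subgroup (sigG G) N -> N (a *g b^-1) -> N a -> N b.
Proof. intros hN h1 h2. apply (eqv_mem G N b a hN); auto. apply eqv_sym; auto. Qed.
Lemma eqv_refl (G : Group) (N : G -> Prop) a : subgroup (sigG G) N -> N (a *g a^-1).
Proof. intros hN. rewrite mulgV. apply (sub_one G N hN). Qed.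

Lemma cmp (G : Group) (x : PNiT G) N M : Ni G N -> Ni G M -> (forall g, N g -> M g) -> M (x @@ N *g (x @@ M)^-1).
Proof. intros; apply (proj2_sig x); auto. Qed.

Lemma agree_N (G : Group) (x y : PNiT G) N c : Ni G N -> (forall g, lcs (sigG G) c g -> N g) ->
  lcs (sigG G) c (x @@ (lcs (sigG G) c) *g (y @@ (lcs (sigG G) c))^-1) -> N (x @@ N *g (y @@ N)^-1).
Proof.
  intros hN hc h. pose proof (Ni_sub G N hN) as hS. pose proof (Ni_lcs G c) as hC.
  apply (eqv_trans G N _ (x @@ (lcs (sigG G) c))); [exact hS| |].
  - apply eqv_sym; [exact hS|]. apply cmp; auto.
  - apply (eqv_trans G N _ (y @@ (lcs (sigG G) c))); [exact hS|apply hc, h|]. apply cmp; auto.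
Qed.

Lemma iota_compat (G : Group) (g : G) : compat G (fun _ => g).
Proof. intros N M _ hM _. apply eqv_refl, Ni_sub, hM. Qed.
Definition iota (G : Group) (g : G) : PNiT G := exist _ _ (iota_compat G g).

Lemma clcsSS (G : Group) k : clcs G (S (S k)) = PNi_closure G (gen (PNi G) (comms (PNi G) (clcs G (S k)))).
Proof. reflexivity. Qed.

Lemma PNi_sat (G : Group) (x y : PNiT G) : (forall N, x @@ N = y @@ N) -> geq (PNi G) x y.
Proof. intros e N hN. simpl. rewrite e. apply eqv_refl, Ni_sub, hN. Qed.

Lemma closure_incl (G : Group) (A : PNiT G -> Prop) x : A x -> PNi_closure G A x.
Proof. intros h N hN. exists x. split; auto. apply eqv_refl, Ni_sub, hN. Qed.

Definition K (G : Group) j (x : PNiT G) := lcs (sigG G) j (x @@ (lcs (sigG G) j)).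

Lemma K_subgroup (G : Group) j : subgroup (PNi G) (K G j).
Proof.
  pose proof (lcs_sub G j) as hS. unfold K. repeat split.
  - apply (sub_one G _ hS).
  - intros x y hx hy. apply (sub_mul G _ _ _ hS hx hy).
  - intros x hx. apply (sub_inv G _ _ hS hx).
  - intros x y e hx. simpl in e. apply (eqv_mem' G _ _ _ hS (e _ (Ni_lcs G j)) hx).
Qed.

Lemma clcs_K (G : Group) j x : clcs G j x -> K G j x.
Proof.
  revert x; induction j as [|[|k] IH]; [intros; exact I|intros; exact I|].
  intros x hx. rewrite clcsSS in hx.
  pose proof (lcs_sub G (S (S k))) as hS.
  destruct (hx _ (Ni_lcs G (S (S k)))) as [a [ha e]].
  assert (hKa : K G (S (S k)) a).
  { refine (gen_sub (PNi G) _ _ (K_subgroup G _) _ a ha).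
    intros b [g [c [hc ->]]]. unfold K. rewrite lcsSS. apply gen_incl.
    exists (g @@ (lcs (sigG G) (S (S k)))), (c @@ (lcs (sigG G) (S (S k)))). split; [|reflexivity].
    pose proof (IH c hc) as hK. unfold K in hK.
    apply (eqv_mem G _ _ (c @@ (lcs (sigG G) (S k))) (lcs_sub G (S k))); [|exact hK].
    apply cmp; try apply Ni_lcs. intro; apply lcs_decr. }
  exact (eqv_mem' G _ _ _ hS e hKa).
Qed.

Lemma iota_step (G : Group) k :
  (forall g, lcs (sigG G) (S k) g -> clcs G (S k) (iota G g)) ->
  forall g, lcs (sigG G) (S (S k)) g -> gen (PNi G) (comms (PNi G) (clcs G (S k))) (iota G g).
Proof.
  intros IH. set (A := gen (PNi G) (comms (PNi G) (clcs G (S k)))).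
  pose proof (gen_subgroup (PNi G) (comms (PNi G) (clcs G (S k)))) as hA. fold A in hA.
  destruct hA as (h1 & hm & hi & hs).
  intros g hg. rewrite lcsSS in hg. revert hg.
  apply (gen_sub (sigG G) _ (fun g => A (iota G g))).
  - repeat split.
    + apply (hs (sone (PNi G))); [apply PNi_sat; reflexivity|exact h1].
    + intros x y hx hy. apply (hs (smul (PNi G) (iota G x) (iota G y))); [apply PNi_sat; reflexivity|apply hm; auto].
    + intros x hx. apply (hs (sinv (PNi G) (iota G x))); [apply PNi_sat; reflexivity|apply hi; auto].
    + intros x y e hx. simpl in e. subst; auto.
  - intros a [u [c [hc ->]]]. apply (hs (commg (PNi G) (iota G u) (iota G c))); [apply PNi_sat; reflexivity|].
    apply gen_incl. exists (iota G u), (iota G c). split; [apply IH, hc|reflexivity].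
Qed.

Lemma iota_clcs (G : Group) k g : lcs (sigG G) k g -> clcs G k (iota G g).
Proof.
  revert g; induction k as [|[|k] IH]; [intros; exact I|intros; exact I|].
  intros g hg. rewrite clcsSS. apply closure_incl. apply iota_step; auto.
Qed.

Lemma K_clcs (G : Group) j x : K G j x -> clcs G j x.
Proof.
  destruct j as [|[|k]]; [intros; exact I|intros; exact I|].
  intros hx. rewrite clcsSS. intros N hN.
  destruct (Ni_bound G N hN) as [c hc].
  set (m := max c (S (S k))). set (M := lcs (sigG G) m).
  exists (iota G (x @@ M)). split.
  - apply iota_step; [intros; apply iota_clcs; auto|].
    apply (eqv_mem G _ _ (x @@ (lcs (sigG G) (S (S k)))) (lcs_sub G _)); [|exact hx].
    apply cmp; try apply Ni_lcs. intro g; apply lcs_mono; unfold m; lia.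
  - simpl. apply cmp; [apply Ni_lcs|exact hN|].
    intros g hg; apply hc. apply (lcs_mono G c m); [unfold m; lia|exact hg].
Qed.

Lemma iso_part (G : Group) j :
  isomorphic (quotient (PNi G) (clcs G j)) (quotient (sigG G) (lcs (sigG G) j)).
Proof.
  pose proof (lcs_sub G j) as hS.
  exists (fun x : PNiT G => x @@ (lcs (sigG G) j)). repeat split.
  - intros x y e. apply (clcs_K G j _ e).
  - intros x y. simpl. apply eqv_refl, hS.
  - intros x y e. apply (K_clcs G j). exact e.
  - intros z. exists (iota G z). simpl. apply eqv_refl, hS.
Qed.

Definition agree (G : Group) (x y : PNiT G) k :=
  lcs (sigG G) k (x @@ (lcs (sigG G) k) *g (y @@ (lcs (sigG G) k))^-1).

Lemma agree_down (G : Group) x y k k' : (k' <= k)%nat -> agree G x y k -> agree G x y k'.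
Proof.
  intros hk h. unfold agree. apply (agree_N G x y _ k (Ni_lcs G k')); [|exact h].
  intro g; apply lcs_mono; exact hk.
Qed.
Lemma agree_sym (G : Group) x y k : agree G x y k -> agree G y x k.
Proof. unfold agree; intros; apply eqv_sym; auto; apply lcs_sub. Qed.
Lemma agree_trans (G : Group) x y z k : agree G x y k -> agree G y z k -> agree G x z k.
Proof. unfold agree; intros; eapply eqv_trans; eauto; apply lcs_sub. Qed.

Lemma geq_agree (G : Group) x y : geq (PNi G) x y <-> forall k, agree G x y k.
Proof.
  split.
  - intros h k. apply (h _ (Ni_lcs G k)).
  - intros h N hN. destruct (Ni_bound G N hN) as [c hc]. apply (agree_N G x y N c hN hc (h c)).
Qed.

Lemma least_ex (G : Group) x y : (exists k, ~ agree G x y k) ->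
  exists m, ~ agree G x y m /\ forall k, (k < m)%nat -> agree G x y k.
Proof.
  intros [k hk]. apply NNPP; intro hno. apply hk.
  assert (H : forall n k, (k <= n)%nat -> agree G x y k).
  { induction n as [|n IH]; intros k' hk'.
    - apply NNPP; intro ha. apply hno. exists k'. split; auto. intros; lia.
    - destruct (Nat.eq_dec k' (S n)) as [->|ne]; [|apply IH; lia].
      apply NNPP; intro ha. apply hno. exists (S n). split; auto. intros k'' hk''. apply IH; lia. }
  apply (H k k (le_n k)).
Qed.

Definition dist (G : Group) (x y : PNiT G) : R :=
  match excluded_middle_informative (exists k, ~ agree G x y k) with
  | left h => (/ (2 ^ (proj1_sig (constructive_indefinite_description _ (least_ex G x y h)))))%R
  | right _ => 0%R
  end.

Lemma dist_spec (G : Group) x y :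
  ((forall k, agree G x y k) /\ dist G x y = 0%R) \/
  (exists m, ~ agree G x y m /\ (forall k, (k < m)%nat -> agree G x y k) /\ dist G x y = (/ (2 ^ m))%R).
Proof.
  unfold dist. destruct (excluded_middle_informative _) as [h|h].
  - right. destruct (constructive_indefinite_description _ _) as [m [h1 h2]]. simpl. exists m. auto.
  - left. split; auto. intro k. apply NNPP; intro hk. apply h; eauto.
Qed.

Lemma least_uniq (G : Group) x y m m' :
  ~ agree G x y m -> (forall k, (k < m)%nat -> agree G x y k) ->
  ~ agree G x y m' -> (forall k, (k < m')%nat -> agree G x y k) -> m = m'.
Proof.
  intros h1 h2 h3 h4. destruct (Nat.lt_trichotomy m m') as [l|[e|l]]; auto.
  - exfalso; apply h1, h4, l.
  - exfalso; apply h3, h2, l.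
Qed.

Lemma inv2pow_pos m : (0 < / (2 ^ m))%R.
Proof. apply Rinv_0_lt_compat, pow_lt; lra. Qed.

Lemma inv2pow_le m n : (m <= n)%nat -> (/ (2 ^ n) <= / (2 ^ m))%R.
Proof.
  intros h. apply Rinv_le_contravar; [apply pow_lt; lra|]. apply Rle_pow; [lra|exact h].
Qed.

Lemma INR_le_pow2 n : (INR n <= 2 ^ n)%R.
Proof.
  induction n as [|n IH]; [simpl; lra|].
  rewrite S_INR. change (2 ^ S n)%R with (2 * 2 ^ n)%R. pose proof (Rle_pow 2 0 n ltac:(lra) ltac:(lia)). simpl in H. lra.
Qed.

Lemma dist_nonneg (G : Group) x y : (0 <= dist G x y)%R.
Proof.
  destruct (dist_spec G x y) as [[_ ->]|[m [_ [_ ->]]]]; [lra|left; apply inv2pow_pos].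
Qed.

Lemma dist_ge (G : Group) x y c : ~ agree G x y c -> (/ (2 ^ c) <= dist G x y)%R.
Proof.
  intros hc. destruct (dist_spec G x y) as [[h _]|[m [h1 [h2 ->]]]].
  - exfalso; apply hc, h.
  - apply inv2pow_le. destruct (Compare_dec.le_lt_dec m c) as [l|l]; auto. exfalso; apply hc, h2, l.
Qed.

Lemma dist_le (G : Group) x y k : agree G x y k -> (dist G x y <= / (2 ^ (S k)))%R.
Proof.
  intros hk. destruct (dist_spec G x y) as [[_ ->]|[m [h1 [h2 ->]]]].
  - left; apply inv2pow_pos.
  - apply inv2pow_le. destruct (Compare_dec.le_lt_dec m k) as [l|l]; [|lia].
    exfalso; apply h1, (agree_down G x y k m l hk).
Qed.

Lemma metr (G : Group) : PNi_metrizable G.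
Proof.
  exists (dist G). repeat split.
  - apply dist_nonneg.
  - intros h. apply geq_agree. destruct (dist_spec G x y) as [[a _]|[m [_ [_ e]]]]; auto.
    pose proof (inv2pow_pos m). lra.
  - intros h0. pose proof (proj1 (geq_agree G x y) h0) as h. destruct (dist_spec G x y) as [[_ e]|[m [h1 _]]]; auto.
    exfalso; apply h1, h.
  - intros x y. destruct (dist_spec G x y) as [[a e]|[m [h1 [h2 e]]]];
      destruct (dist_spec G y x) as [[a' e']|[m' [h1' [h2' e']]]]; rewrite e, e'; auto.
    + exfalso; apply h1', agree_sym, a.
    + exfalso; apply h1, agree_sym, a'.
    + f_equal. f_equal. apply (least_uniq G x y); auto.
      * intro hh; apply h1', agree_sym, hh.
      * intros; apply agree_sym, h2'; auto.
  - intros x y z. pose proof (dist_nonneg G x y). pose proof (dist_nonneg G y z).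
    destruct (dist_spec G x z) as [[_ e]|[m [h1 [h2 e]]]]; [lra|].
    rewrite e. destruct (classic (agree G x y m)) as [a|a].
    + destruct (classic (agree G y z m)) as [b|b].
      * exfalso; apply h1; eapply agree_trans; eauto.
      * pose proof (dist_ge G y z m b). lra.
    + pose proof (dist_ge G x y m a). lra.
  - intros hU x hx. destruct (hU x hx) as [N [hN hy]].
    destruct (Ni_bound G N hN) as [c hc]. exists (/ (2 ^ c))%R. split; [apply inv2pow_pos|].
    intros y hd. apply hy. apply (agree_N G y x N c hN hc).
    apply agree_sym. apply NNPP; intro na. pose proof (dist_ge G x y c na). lra.
  - intros hU x hx. destruct (hU x hx) as [eps [he hy]].
    destruct (archimed_cor1 eps he) as [n [hn hn0]].
    exists (lcs (sigG G) n). split; [apply Ni_lcs|].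
    intros y hyx. apply hy. pose proof (dist_le G x y n (agree_sym G y x n hyx)).
    pose proof (inv2pow_le n (S n) ltac:(lia)).
    assert (/ (2 ^ n) <= / INR n)%R.
    { apply Rinv_le_contravar; [apply lt_0_INR; lia|apply INR_le_pow2]. }
    lra.
Qed.

Theorem mainTheorem2 (G : Group) :
  (forall j : nat, (1 <= j)%nat ->
     isomorphic (quotient (PNi G) (clcs G j)) (quotient (sigG G) (lcs (sigG G) j)))
  /\ PNi_metrizable G.
Proof.
  split; [intros j _; apply iso_part|apply metr].
Qed.
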